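(* Let $\mathcal X=\{1,\dots,N\}$ with $N\ge 2$, let $T\ge1$, let $\mathrm{PWS}$ be a piecewise stationary source for sequences of length $T$ with complexity $C_{\mathrm{PWS}}$, and let $u$ be the uniform distribution on $\mathcal X$. Let $\mathrm{PS}$ be the Probability Smoothing model with fixed parameters $(\alpha,\varepsilon,p)$, where $0<\alpha<1$, $0\le\varepsilon\le1-\frac1N$ and $p$ is a distribution on $\mathcal X$ with $p(x)\ge\frac{\varepsilon}{N-1}$ for all $x$. Then for every sequence $x_{1:T}\in\mathcal X^T$, \[ \ell_{\mathrm{PS}}(x_{1:T})\le \ell_{\mathrm{PWS}}(x_{1:T})+\Big[\frac{\log\frac1{1-\varepsilon}}{\log\frac1\alpha}+N\log\frac1\alpha+(N+1)\log\frac1{1-\varepsilon}\Big]\cdot T+\frac{\log\frac N\varepsilon}{\log\frac1\alpha}\cdot C_{\mathrm{PWS}}+N\cdot D(u\parallel p). \]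
   Context: All logarithms are natural, with $\log\frac10=+\infty$ (so e.g. $\log\frac N\varepsilon=+\infty$ if $\varepsilon=0$). A model maps each finite sequence $x_{1:t}$ over $\mathcal X$ (including the empty sequence) to a distribution on $\mathcal X$; write $M(x;x_{1:t})$ for the probability it gives to $x$. The code length a model $M$ assigns is $\ell_M(x_{1:T})=\sum_{t=1}^T\log\frac1{M(x_t;x_{<t})}$, where $x_{<t}=x_{1:t-1}$. Probability Smoothing with fixed parameters $(\alpha,\varepsilon,p)$: $\mathrm{PS}(\cdot;\text{empty})=p$, and for $t\ge1$, $\mathrm{PS}(x;x_{1:t})=\alpha\,\mathrm{PS}(x;x_{<t})+(1-\alpha)(1-\varepsilon)$ if $x=x_t$, and $=\alpha\,\mathrm{PS}(x;x_{<t})+(1-\alpha)\frac{\varepsilon}{N-1}$ if $x\ne x_t$. A piecewise stationary source (PWS) for length $T$ is given by a partition $\mathcal P=\{[t_1,t_2),[t_2,t_3),\dots,[t_n,t_{n+1})\}$ of $\{1,\dots,T\}$ into integer intervals ($[i,j)=\{i,\dots,j-1\}$, $1=t_1<\dots<t_{n+1}=T+1$) and distributions $\{p_S\}_{S\in\mathcal P}$ on $\mathcal X$; it predicts $p_S$ at time $t$ where $S$ is the segment containing $t$, so $\ell_{\mathrm{PWS}}(x_{1:T})=\sum_{S\in\mathcal P}\sum_{t\in S}\log\frac1{p_S(x_t)}$. The transition set $\mathcal T$ of $\mathcal P$ consists of the triples $(t,A,B)$ with $A=[i,t)\in\mathcal P$ and $B=[t,j)\in\mathcal P$ consecutive segments.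 The complexity is $C_{\mathrm{PWS}}=1+\sum_{(t,A,B)\in\mathcal T}\lVert p_B-p_A\rVert$, where $\lVert p-q\rVert=\sum_x|p(x)-q(x)|$. For distributions $q,r$ with $r$ fully supported, $D(q\parallel r)=\sum_{x:\,q(x)>0}q(x)\log\frac{q(x)}{r(x)}$. *)

(* Defs.v *)
From mathcomp Require Import all_boot all_order all_algebra.
From mathcomp Require Import all_classical all_reals.
From mathcomp Require Import ereal sequences exp.
Set Implicit Arguments. Unset Strict Implicit. Unset Printing Implicit Defensive.
Import Order.TTheory GRing.Theory Num.Theory.
Local Open Scope ring_scope.

(* The alphabet {1,...,N} is represented by 'I_N = {0,...,N-1}. *)

Definition elogdiv {R : realType} (a b : R) : \bar R :=
  if b == 0 then +oo%E else (ln (a / b))%:E.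

Definition loginv {R : realType} (q : R) : \bar R := elogdiv 1 q.

Definition is_dist {R : realType} {N : nat} (q : 'I_N -> R) : Prop :=
  (forall x, 0 <= q x) /\ \sum_(x < N) q x = 1.

Definition model (R : realType) (N : nat) := seq 'I_N -> 'I_N -> R.

Definition codelen {R : realType} {N T : nat} (M : model R N)
  (xs : T.-tuple 'I_N) : \bar R :=
  (\sum_(t < T) loginv (M (take t xs) (tnth xs t)))%E.

Definition ps_step {R : realType} {N : nat} (alpha eps : R)
  (q : 'I_N -> R) (y : 'I_N) : 'I_N -> R :=
  fun x => if x == y then alpha * q x + (1 - alpha) * (1 - eps)
           else alpha * q x + (1 - alpha) * (eps / (N%:R - 1)).

Definition PS {R : realType} {N : nat} (alpha eps : R) (p : 'I_N -> R)
  : model R N :=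
  fun h => foldl (ps_step alpha eps) p h.

(** Piecewise stationary source for length T (0-indexed times 0..T-1):
    n segments [tb k, tb (k+1)) for k < n, with tb 0 = 0, tb n = T,
    tb strictly increasing; segment k uses distribution q k. *)
Definition is_PWS {R : realType} {N : nat} (T n : nat) (tb : nat -> nat)
  (q : nat -> 'I_N -> R) : Prop :=
  [/\ tb 0 = 0%N, tb n = T,
      (forall k, (k < n)%N -> (tb k < tb k.+1)%N) &
      (forall k, (k < n)%N -> is_dist (q k))].

Definition PWS_codelen {R : realType} {N T : nat} (n : nat) (tb : nat -> nat)
  (q : nat -> 'I_N -> R) (xs : T.-tuple 'I_N) : \bar R :=
  (\sum_(k < n) \sum_(t < T | (tb k <= t < tb k.+1)%N)
      loginv (q k (tnth xs t)))%E.

Definition PWS_complexity {R : realType} {N : nat} (n : nat)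
  (q : nat -> 'I_N -> R) : R :=
  1 + \sum_(1 <= k < n) \sum_(x < N) `|q k x - q k.-1 x|.

Definition uniform_dist {R : realType} (N : nat) : 'I_N -> R := fun _ => N%:R^-1.

Definition KL {R : realType} {N : nat} (q r : 'I_N -> R) : \bar R :=
  (\sum_(x < N | (0 < q x)%R) (q x)%:E * elogdiv (q x) (r x))%E.

(* Main.v *)
Require Import Defs.
From mathcomp Require Import all_boot all_order all_algebra.
From mathcomp Require Import all_classical all_reals.
From mathcomp Require Import ereal sequences exp.
From mathcomp Require Import ring lra zify.
Import Order.TTheory GRing.Theory Num.Theory.
Local Open Scope ring_scope.
Section S.
Variable R : realType.
Implicit Types (a b q y : R).

Lemma ln_le_sub1 (u : R) : 0 < u -> ln u <= u - 1.
Proof. move=> u0; have := @le_ln1Dx R (u - 1); rewrite addrCA subrr addr0; apply; lra. Qed.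

Lemma core a y q : 0 < a -> a < 1 -> 0 < y -> 0 < q ->
  ln q + 1 - q <= ln a^-1 + (1 + q / ln a^-1) * ln (a * y + 1 - a)
                  - (q / ln a^-1) * ln y.
Proof.
move=> a0 a1 y0 q0.
set l := ln a^-1.
have l0 : 0 < l by apply: ln_gt0; rewrite invf_gt1.
set s := q / l.
have s0 : 0 < s by apply: divr_gt0.
set Z := a * y + 1 - a.
have Z0 : 0 < Z by rewrite /Z; nra.
set b1 := a * y * (1 + s) / s.
set b2 := (1 - a) * (1 + s).
have b1p : 0 < b1 by rewrite /b1; apply: divr_gt0 => //; rewrite !mulr_gt0 //; lra.
have b2p : 0 < b2 by rewrite /b2 mulr_gt0 //; lra.
have eZ : s * b1 + b2 = (1 + s) * Z.
  by rewrite /b1 /b2 /Z; field; rewrite gt_eqF.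
have h1 := ln_le_sub1 _ (divr_gt0 b1p Z0).
have h2 := ln_le_sub1 _ (divr_gt0 b2p Z0).
rewrite ln_div ?posrE // in h1; rewrite ln_div ?posrE // in h2.
have st1 : s * ln b1 + ln b2 <= (1 + s) * ln Z.
  have : s * (ln b1 - ln Z) + (ln b2 - ln Z) <= s * (b1 / Z - 1) + (b2 / Z - 1).
    by apply: lerD => //; rewrite (ler_pM2l s0).
  have -> : s * (b1 / Z - 1) + (b2 / Z - 1) = 0.
    have -> : s * (b1 / Z - 1) + (b2 / Z - 1) = (s * b1 + b2) / Z - (1 + s).
      by field; rewrite gt_eqF.
    by rewrite eZ mulfK ?gt_eqF // subrr.
  lra.
have ea1 : ln b1 = ln a + ln y + ln (1 + s) - ln s.
  have s1 : 0 < 1 + s by lra.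
  rewrite /b1 ln_div ?posrE ?mulr_gt0 //.
  rewrite (lnM (x := a * y)) ?posrE ?mulr_gt0 // (lnM (x := a)) ?posrE //.
  all: try by rewrite invr_gt0.
have ea2 : ln b2 = ln (1 - a) + ln (1 + s) by rewrite /b2 lnM ?posrE //; lra.
have la : ln a = - l by rewrite /l lnV ?posrE ?opprK.
have sl : s * l = q by rewrite /s mulfVK ?gt_eqF.
have eqq : ln q = ln s + ln l by rewrite -sl lnM ?posrE //.
have st3 : ln l <= ln (1 - a) + l.
  have : l <= a^-1 - 1 by apply: ln_le_sub1; rewrite invr_gt0.
  move=> hl.
  have -> : ln (1 - a) + l = ln ((1 - a) / a).
    by rewrite ln_div ?posrE ?subr_gt0 // /l lnV ?posrE //; ring.
  rewrite ler_ln ?posrE //; last by apply: divr_gt0; lra.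
  by move: hl; rewrite mulrBl divff ?gt_eqF // mul1r.
have st4 : 1 <= (1 + s) * (ln (1 + s) - ln s).
  have s1 : 0 < 1 + s by lra.
  have := ln_le_sub1 _ (divr_gt0 s0 s1).
  rewrite ln_div ?posrE //.
  have -> : s / (1 + s) - 1 = - (1 + s)^-1 by field; rewrite gt_eqF.
  move=> h.
  have : (1 + s) * (1 + s)^-1 <= (1 + s) * (ln (1 + s) - ln s).
    by rewrite ler_pM2l; [lra | lra].
  by rewrite divff //; lra.
rewrite eqq.
have e1 : s * ln b1 = - q + s * ln y + s * (ln (1 + s) - ln s).
  by rewrite ea1 la -sl; ring.
nra.
Qed.

Definition Phi {N} (P : 'I_N -> R) := \sum_(x < N) - ln (P x).
Definition Psi {N} (q P : 'I_N -> R) := \sum_(x < N) q x * - ln (P x).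

Lemma sum_except {N} (f : 'I_N -> R) z : \sum_(x < N | x != z) f x = \sum_(x < N) f x - f z.
Proof. by rewrite [\sum_(x < N) f x](bigD1 z) //= addrAC subrr add0r. Qed.

Lemma ps_step_sum {N} a e (P : 'I_N -> R) z : (2 <= N)%N ->
  \sum_x P x = 1 -> \sum_x ps_step a e P z x = 1.
Proof.
move=> N2 s1; rewrite (bigD1 z) //= /ps_step eqxx.
have -> : \sum_(x < N | x != z) (if x == z then a * P x + (1 - a) * (1 - e)
            else a * P x + (1 - a) * (e / (N%:R - 1))) =
          \sum_(x < N | x != z) (a * P x + (1 - a) * (e / (N%:R - 1))).
  by apply: eq_bigr => x /negbTE ->.
rewrite big_split /= -mulr_sumr sum_except s1 sum_except sumr_const card_ord.
have N1 : (N%:R - 1 : R) != 0.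
  by rewrite subr_eq0 pnatr_eq1 (gtn_eqF N2).
rewrite -mulr_natr; field => //.
Qed.

Lemma ps_step_lb {N} a e (P : 'I_N -> R) z (m : R) : 0 <= a <= 1 ->
  m = e / (N%:R - 1) -> m <= 1 - e -> (forall x, m <= P x) ->
  forall x, m <= ps_step a e P z x.
Proof.
move=> /andP[a0 a1] -> hm hP x; have := hP x; rewrite /ps_step.
case: (x == z) => h; nra.
Qed.

Lemma step {N} a e (P q : 'I_N -> R) z :
  (2 <= N)%N -> 0 < a -> a < 1 -> 0 <= e -> e < 1 ->
  (forall x, 0 < P x) -> is_dist q -> 0 < q z ->
  - ln (P z) <= - ln (q z)
     + (ln (1 - e)^-1 / ln a^-1 + N%:R * ln a^-1 + (N%:R + 1) * ln (1 - e)^-1)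
     + (Phi P - Phi (ps_step a e P z))
     + (ln a^-1)^-1 * (Psi q P - Psi q (ps_step a e P z)).
Proof.
move=> N2 a0 a1 e0 e1 Pp [q0 q1] qz.
set P' := ps_step a e P z.
set l := ln a^-1.
have l0 : 0 < l by apply: ln_gt0; rewrite invf_gt1.
set le := ln (1 - e)^-1.
have le0 : 0 <= le by apply: ln_ge0; rewrite invf_ge1; lra.
have N1 : (0 : R) < N%:R - 1.
  by rewrite subr_gt0 ltr1n.
have ox x : x != z -> - ln (P' x) <= l - ln (P x).
  move=> xz; rewrite /P' /ps_step (negbTE xz).
  have Px := Pp x.
  have h1 : a * P x <= a * P x + (1 - a) * (e / (N%:R - 1)).
    by rewrite lerDl mulr_ge0 ?divr_ge0 //; lra.
  have : ln (a * P x) <= ln (a * P x + (1 - a) * (e / (N%:R - 1))).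
    by rewrite ler_ln ?posrE ?mulr_gt0 //; apply: lt_le_trans h1; rewrite mulr_gt0.
  rewrite lnM ?posrE // /l lnV ?posrE //; lra.
set y := P z.
have y0 : 0 < y := Pp z.
have P'z : P' z = a * y + (1 - a) * (1 - e) by rewrite /P' /ps_step eqxx.
have Z0 : 0 < a * y + 1 - a by have := mulr_gt0 a0 y0; lra.
have hX : - le + ln (a * y + 1 - a) <= ln (P' z).
  have -> : - le + ln (a * y + 1 - a) = ln ((1 - e) * (a * y + 1 - a)).
    rewrite /le lnV ?posrE ?subr_gt0 // opprK lnM ?posrE ?subr_gt0 //; lra.
  have hay := mulr_gt0 a0 y0.
  have hae : 0 < (1 - a) * (1 - e) by rewrite mulr_gt0 // subr_gt0.
  have hey : 0 <= e * (a * y) by rewrite mulr_ge0 // ltW.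
  rewrite P'z ler_ln ?posrE ?mulr_gt0 ?subr_gt0 //; lra.
have hPhi : Phi P' <= - ln (P' z) + (N%:R - 1) * l + Phi P + ln y.
  have : \sum_(x < N | x != z) - ln (P' x) <= \sum_(x < N | x != z) (l + - ln (P x)).
    by apply: ler_sum => x xz; have := ox x xz; lra.
  rewrite big_split /= !sum_except sumr_const card_ord -mulr_natr /Phi /y; lra.
have hPsi : Psi q P' <= q z * - ln (P' z) + (1 - q z) * l + Psi q P + q z * ln y.
  have : \sum_(x < N | x != z) q x * - ln (P' x) <= \sum_(x < N | x != z) (q x * l + q x * - ln (P x)).
    apply: ler_sum => x xz; have := ox x xz; have := q0 x; nra.
  rewrite big_split /= -mulr_suml !sum_except q1 /Psi /y; lra.
have hc := core a y (q z) a0 a1 y0 qz.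
have qle1 : q z <= 1.
  by rewrite -q1 (bigD1 z) //= lerDl sumr_ge0.
set s := q z / l.
have s0 : 0 <= s by rewrite divr_ge0 //; lra.
have sle : s <= l^-1 by rewrite /s ler_pdivrMr // mulVf ?gt_eqF.
have f1 : (1 + s) * (- le + ln (a * y + 1 - a)) <= (1 + s) * ln (P' z).
  by rewrite ler_pM2l //; lra.
have f2 : s * le <= l^-1 * le by apply: ler_wpM2r.
have f3 : l^-1 * (Psi q P - Psi q P') >= l^-1 * (q z * ln (P' z) - (1 - q z) * l - q z * ln y).
  by rewrite ler_pM2l ?invr_gt0 //; lra.
have ee1 : l^-1 * (q z * ln (P' z) - (1 - q z) * l - q z * ln y) =
          s * ln (P' z) - (1 - q z) - s * ln y.
  by rewrite /s; field; rewrite gt_eqF.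
rewrite ee1 in f3.
have ee2 : le / l = l^-1 * le by rewrite mulrC.
rewrite ee2.
have hN : 1 <= (N%:R : R) by rewrite ler1n; apply: leq_trans N2.
have f4 : le <= N%:R * le by rewrite ler_peMl.
rewrite /Phi in hPhi; rewrite /Phi.
rewrite -/l -/s in hc. lra.
Qed.

Lemma tele_if (u : nat -> R) (a b : nat) : (a <= b)%N -> forall T,
  \sum_(t < T) (if (a <= t < b)%N then u t - u t.+1 else 0) = u (minn a T) - u (minn b T).
Proof.
move=> ab; elim=> [|T IH]; first by rewrite big_ord0 !minn0 subrr.
rewrite big_ord_recr /= IH.
case: (ltnP T a) => Ta.
  have e1 : minn a T = T by lia.
  have e2 : minn b T = T by lia.
  have e3 : minn a T.+1 = T.+1 by lia.
  have e4 : minn b T.+1 = T.+1 by lia.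
  by rewrite ?e1 ?e2 ?e3 ?e4 /= !subrr addr0.
case: (ltnP T b) => Tb.
  have e1 : minn a T = a by lia.
  have e2 : minn b T = T by lia.
  have e3 : minn a T.+1 = a by lia.
  have e4 : minn b T.+1 = T.+1 by lia.
  rewrite ?e1 ?e2 ?e3 ?e4 /=; ring.
have e1 : minn a T = a by lia.
have e2 : minn b T = b by lia.
have e3 : minn a T.+1 = a by lia.
have e4 : minn b T.+1 = b by lia.
by rewrite ?e1 ?e2 ?e3 ?e4 /= addr0.
Qed.

Lemma tele_seg (u : nat -> R) (a b T : nat) : (a <= b)%N -> (b <= T)%N ->
  \sum_(t < T | (a <= t < b)%N) (u t - u t.+1) = u a - u b.
Proof.
move=> ab bT; rewrite big_mkcond /= tele_if //.
have e1 : minn a T = a by lia.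
have e2 : minn b T = b by lia.
by rewrite e1 e2.
Qed.

Lemma partition T n (tb : nat -> nat) (f : 'I_T -> R) :
  tb 0 = 0%N -> tb n = T -> (forall k, (k < n)%N -> (tb k <= tb k.+1)%N) ->
  \sum_(k < n) \sum_(t < T | (tb k <= t < tb k.+1)%N) f t = \sum_(t < T) f t.
Proof.
move=> t0 tn mono.
suff H : forall m, (m <= n)%N ->
  \sum_(k < m) \sum_(t < T | (tb k <= t < tb k.+1)%N) f t = \sum_(t < T | (t < tb m)%N) f t.
  by rewrite H // tn; apply: eq_bigl => t; rewrite ltn_ord.
elim=> [|m IH] mn.
  by rewrite big_ord0 t0 big_pred0.
rewrite big_ord_recr /= IH ?(ltnW mn) //.
rewrite [RHS](bigID (fun t : 'I_T => (t < tb m)%N)) /=.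
have hm := mono m mn.
congr (_ + _); apply: eq_bigl => t.
  by apply/idP/idP; lia.
by apply/idP/idP; lia.
Qed.

Lemma tele_ord (g : nat -> R) n : \sum_(k < n) (g k - g k.+1) = g 0%N - g n.
Proof.
elim: n => [|n IH]; first by rewrite big_ord0 subrr.
by rewrite big_ord_recr /= IH; ring.
Qed.

Lemma inv_fold {N} a e (h : seq 'I_N) (P : 'I_N -> R) :
  (2 <= N)%N -> 0 <= a <= 1 -> e / (N%:R - 1) <= 1 - e ->
  \sum_x P x = 1 -> (forall x, e / (N%:R - 1) <= P x) ->
  \sum_x foldl (ps_step a e) P h x = 1 /\ (forall x, e / (N%:R - 1) <= foldl (ps_step a e) P h x).
Proof.
move=> N2 ha hm; elim: h P => [|z h IH] P s1 lb //=.
apply: IH; first exact: ps_step_sum.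
exact: ps_step_lb.
Qed.

Lemma St_succ {N T} a e p (xs : T.-tuple 'I_N) (t : 'I_T) :
  PS a e p (take t.+1 xs) = ps_step a e (PS a e p (take t xs)) (tnth xs t).
Proof.
rewrite (take_nth (tnth xs t)); last by rewrite size_tuple ltn_ord.
by rewrite /PS foldl_rcons -tnth_nth.
Qed.

Lemma main_real (N T n : nat) (tb : nat -> nat) (q : nat -> 'I_N -> R)
  (a e : R) (p : 'I_N -> R) (xs : T.-tuple 'I_N) :
  (2 <= N)%N -> is_PWS T n tb q ->
  0 < a -> a < 1 -> 0 < e -> e <= 1 - N%:R^-1 -> is_dist p ->
  (forall x, e / (N%:R - 1) <= p x) ->
  (forall (k : 'I_n) (t : 'I_T), (tb k <= t < tb k.+1)%N -> 0 < q k (tnth xs t)) ->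
  \sum_(t < T) - ln (PS a e p (take t xs) (tnth xs t)) <=
  \sum_(k < n) \sum_(t < T | (tb k <= t < tb k.+1)%N) - ln (q k (tnth xs t))
  + (ln (1 - e)^-1 / ln a^-1 + N%:R * ln a^-1 + (N%:R + 1) * ln (1 - e)^-1) * T%:R
  + ln (N%:R / e) * (ln a^-1)^-1 * PWS_complexity n q
  + N%:R * \sum_(x < N) (N%:R^-1 * ln (N%:R^-1 / p x)).
Proof.
move=> N2 [t0 tn mono qd] a0 a1 e0 eN [p0 p1] plb qpos.
set A := (ln (1 - e)^-1 / ln a^-1 + N%:R * ln a^-1 + (N%:R + 1) * ln (1 - e)^-1).
set l := ln a^-1.
have l0 : 0 < l by apply: ln_gt0; rewrite invf_gt1.
have Nr : (2 : R) <= N%:R by rewrite ler_nat.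
have N0 : (0 : R) < N%:R by lra.
have N1 : (0 : R) < N%:R - 1 by lra.
have hNi : N%:R * N%:R^-1 = 1 :> R by rewrite mulfV // gt_eqF.
have Ni0 : (0 : R) < N%:R^-1 by rewrite invr_gt0.
have e1 : e < 1 by lra.
set m := e / (N%:R - 1).
have m0 : 0 < m by rewrite divr_gt0.
have hm : m <= 1 - e.
  rewrite /m ler_pdivrMr //.
  have : 0 <= (1 - N%:R^-1 - e) * N%:R by rewrite mulr_ge0 //; lra.
  nra.
have meN : e / N%:R <= m.
  rewrite /m ler_pdivrMr // mulrAC ler_pdivlMr //; nra.
set St := fun j : nat => PS a e p (take j xs).
have inv j : \sum_x St j x = 1 /\ (forall x, m <= St j x).
  by apply: inv_fold => //; rewrite !ltW.
have Spos j x : 0 < St j x by have [_ h] := inv j; exact: lt_le_trans (h x).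
have Sle1 j x : St j x <= 1.
  have [s1 _] := inv j; rewrite -s1 (bigD1 x) //= lerDl sumr_ge0 // => y _.
  exact: ltW.
set M := ln (N%:R / e).
have L0 j x : 0 <= - ln (St j x) by rewrite oppr_ge0 ln_le0.
have LM j x : - ln (St j x) <= M.
  rewrite -lnV ?posrE // /M ler_ln ?posrE ?divr_gt0 ?invr_gt0 //.
  rewrite -[N%:R / e]invf_div lef_pV2 ?posrE ?divr_gt0 //.
  exact: le_trans meN (proj2 (inv j) x).
have tbn : forall j, (j <= n)%N -> (tb j <= T)%N.
  suff H : forall d j, (j + d)%N = n -> (tb j <= tb n)%N.
    by move=> j jn; rewrite -tn; apply: (H (n - j)%N); rewrite subnKC.
  elim=> [|d IH] j hj; first by rewrite -hj addn0.
  apply: leq_trans (IH j.+1 _); last by rewrite addSnnS.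
  by apply: ltnW; apply: mono; rewrite -hj addnS ltnS leq_addr.
set u := fun j => Phi (St j).
set v := fun k j => Psi (q k) (St j).
have stp (k : 'I_n) (t : 'I_T) : (tb k <= t < tb k.+1)%N ->
  - ln (St t (tnth xs t)) <= - ln (q k (tnth xs t)) + A + (u t - u t.+1)
     + l^-1 * (v k t - v k t.+1).
  move=> ht; rewrite /u /v /St St_succ.
  apply: step => //; first exact: ltW.
  - by move=> x; exact: (Spos t x).
  - exact: qd.
  - exact: qpos.
clearbody A.
have tbm k : (k < n)%N -> (tb k <= tb k.+1)%N by move=> kn; apply: ltnW; exact: mono.
rewrite -(@partition T n tb (fun t : 'I_T => - ln (St t (tnth xs t)))) //.
set S1 := \sum_(k < n) \sum_(t < T | (tb k <= t < tb k.+1)%N) - ln (q k (tnth xs t)).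
have E2 : \sum_(k < n) \sum_(t < T | (tb k <= t < tb k.+1)%N)
      (- ln (q k (tnth xs t)) + A + (u t - u t.+1) + l^-1 * (v k t - v k t.+1))
    = S1 + A * T%:R + (u 0%N - u T) + l^-1 * \sum_(k < n) (v k (tb k) - v k (tb k.+1)).
  rewrite (eq_bigr (fun k : 'I_n =>
     \sum_(t < T | (tb k <= t < tb k.+1)%N) - ln (q k (tnth xs t))
     + \sum_(t < T | (tb k <= t < tb k.+1)%N) A
     + \sum_(t < T | (tb k <= t < tb k.+1)%N) (u t - u t.+1)
     + l^-1 * (v k (tb k) - v k (tb k.+1)))); last first.
    move=> k _; rewrite big_split /= big_split /= big_split /= -mulr_sumr.
    by rewrite (@tele_seg (v k)) // ?tbm ?tbn // ltn_ord.
  rewrite big_split /= big_split /= big_split /= -mulr_sumr.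
  rewrite (@partition T n tb (fun _ => A)) // (@partition T n tb (fun t : 'I_T => u t - u t.+1)) //.
  by rewrite tele_ord sumr_const card_ord mulr_natr.
have ppos x : 0 < p x by apply: lt_le_trans (plb x).
have B3 : u 0%N - u T <= N%:R * \sum_(x < N) (N%:R^-1 * ln (N%:R^-1 / p x)).
  have eK : N%:R * \sum_(x < N) (N%:R^-1 * ln (N%:R^-1 / p x)) =
            \sum_(x < N) ln N%:R^-1 - \sum_(x < N) ln (p x).
    rewrite mulr_sumr -sumrB; apply: eq_bigr => x _.
    by rewrite mulrA hNi mul1r ln_div ?posrE.
  have eT : \sum_(x < N) (ln (St T x) - ln N%:R^-1) <= 0.
    have [s1 _] := inv T.
    apply: le_trans (_ : \sum_(x < N) (N%:R * St T x - 1) <= 0).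
      apply: ler_sum => x _.
      rewrite -ln_div ?posrE // invrK; have := ln_le_sub1 _ (mulr_gt0 (Spos T x) N0); lra.
    by rewrite sumrB -mulr_sumr s1 sumr_const card_ord mulr1 subrr.
  have S0 : St 0%N = p by rewrite /St take0.
  rewrite eK /u /Phi S0 !sumrN.
  move: eT; rewrite sumrB; lra.
have B4 : \sum_(k < n) (v k (tb k) - v k (tb k.+1)) <= M * PWS_complexity n q.
  have M0 : 0 <= M.
    rewrite /M; apply: ln_ge0; rewrite ler_pdivlMr // mul1r; lra.
  have vM k j : (k < n)%N -> v k j <= M.
    move=> kn; have [q0 q1] := qd k kn.
    rewrite /v /Psi; apply: le_trans (_ : \sum_(x < N) q k x * M <= M).
      by apply: ler_sum => x _; apply: ler_wpM2l => //; exact: LM.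
    by rewrite -mulr_suml q1 mul1r.
  have v0 k j : (k < n)%N -> 0 <= v k j.
    move=> kn; have [q0 q1] := qd k kn.
    by apply: sumr_ge0 => x _; apply: mulr_ge0 => //; exact: L0.
  have vD k j : (k.+1 < n)%N ->
      v k.+1 j - v k j <= M * \sum_(x < N) `|q k.+1 x - q k x|.
    move=> kn; rewrite /v /Psi -sumrB mulr_sumr; apply: ler_sum => x _.
    rewrite -mulrBl.
    apply: le_trans (_ : `|q k.+1 x - q k x| * - ln (St j x) <= _).
      by apply: ler_wpM2r; [exact: L0 | exact: ler_norm].
    by rewrite mulrC; apply: ler_wpM2r; [exact: normr_ge0 | exact: LM].
  have claim : forall i, (i.+1 <= n)%N ->
      \sum_(k < i.+1) (v k (tb k) - v k (tb k.+1)) + v i (tb i.+1)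
      <= M * (1 + \sum_(1 <= k < i.+1) \sum_(x < N) `|q k x - q k.-1 x|).
    elim=> [|i IH] mn.
      rewrite big_ord_recr big_ord0 big_geq //= add0r addrNK addr0 mulr1.
      exact: vM.
    rewrite big_ord_recr /= big_nat_recr //=.
    have := IH (ltnW mn); have := vD i (tb i.+1) mn.
    set S := \sum_(k < i.+1) _; set D := \sum_(1 <= k < i.+1) _.
    rewrite mulrDr mulrDr; lra.
  case En : n => [|n'].
    by rewrite big_ord0 /PWS_complexity big_geq // addr0 mulr1.
  have hn : (n'.+1 <= n)%N by rewrite En.
  have := claim n' hn; have := v0 n' (tb n'.+1) hn.
  rewrite /PWS_complexity; lra.
apply: (le_trans (y := \sum_(k < n) \sum_(t < T | (tb k <= t < tb k.+1)%N)
      (- ln (q k (tnth xs t)) + A + (u t - u t.+1) + l^-1 * (v k t - v k t.+1)))).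
  by apply: ler_sum => k _; apply: ler_sum => t ht; exact: stp.
rewrite E2.
have : l^-1 * \sum_(k < n) (v k (tb k) - v k (tb k.+1)) <= l^-1 * (M * PWS_complexity n q).
  by rewrite ler_pM2l ?invr_gt0.
have -> : M * l^-1 * PWS_complexity n q = l^-1 * (M * PWS_complexity n q) by ring.
lra.
Qed.
End S.
Lemma loginv_pos (R : realType) (y : R) : 0 < y -> loginv y = (- ln y)%:E.
Proof. by move=> y0; rewrite /loginv /elogdiv gt_eqF // div1r lnV ?posrE. Qed.

Lemma loginv_ge0 (R : realType) (y : R) : 0 <= y -> y <= 1 -> (0 <= loginv y)%E.
Proof.
move=> y0 y1; rewrite /loginv /elogdiv; case: eqP => [_|/eqP yn0]; first exact: leey.
have yp : 0 < y by rewrite lt_neqAle eq_sym yn0 y0.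
by rewrite lee_fin div1r; apply: ln_ge0; rewrite invf_ge1.
Qed.

Lemma dist_le1 (R : realType) N (q : 'I_N -> R) x : is_dist q -> q x <= 1.
Proof. by case=> q0 q1; rewrite -q1 (bigD1 x) //= lerDl sumr_ge0. Qed.

Lemma noNy (R : realType) (x : \bar R) (r : R) : (r%:E <= x)%E -> x != -oo%E.
Proof. by move=> h; apply/negP => /eqP hx; move: h; rewrite hx leeNy_eq. Qed.

Lemma mulyPos (R : realType) (r : R) : 0 < r -> (+oo * r%:E = +oo)%E.
Proof. by move=> r0; rewrite mulyr gtr0_sg // mul1e. Qed.

Theorem theorem1 (R : realType) (N T : nat) (n : nat) (tb : nat -> nat)
  (q : nat -> 'I_N -> R) (alpha eps : R) (p : 'I_N -> R)
  (xs : T.-tuple 'I_N) :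
  (2 <= N)%N -> (1 <= T)%N ->
  is_PWS T n tb q ->
  0 < alpha -> alpha < 1 ->
  0 <= eps -> eps <= 1 - N%:R^-1 ->
  is_dist p -> (forall x, eps / (N%:R - 1) <= p x) ->
  (codelen (PS alpha eps p) xs <=
     PWS_codelen n tb q xs
     + ((ln ((1 - eps)^-1) / ln (alpha^-1) + N%:R * ln (alpha^-1)
         + (N%:R + 1) * ln ((1 - eps)^-1)) * T%:R)%R%:E
     + elogdiv (N%:R)%R eps * ((ln (alpha^-1))^-1)%R%:E
         * (PWS_complexity n q)%:E
     + (N%:R)%R%:E * KL (@uniform_dist R N) p)%E.
Proof.
move=> N2 T1 hP a0 a1 e0 eN hp plb.
have hP' := hP; case: hP' => t0 tn mono qd.
have l0 : 0 < ln alpha^-1 by apply: ln_gt0; rewrite invf_gt1.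
have Nr : (2 : R) <= N%:R by rewrite ler_nat.
have N0 : (0 : R) < N%:R by lra.
have Ni0 : (0 : R) < N%:R^-1 by rewrite invr_gt0.
have C1 : 1 <= PWS_complexity n q.
  rewrite /PWS_complexity lerDl; apply: sumr_ge0 => k _; apply: sumr_ge0 => x _.
  exact: normr_ge0.
have PWS0 : (0 <= PWS_codelen n tb q xs)%E.
  apply: sume_ge0 => k _; apply: sume_ge0 => t _.
  have [q0 _] := qd k (ltn_ord k).
  by apply: loginv_ge0 => //; apply: dist_le1; exact: qd.
have KLf : forall f : 'I_N -> R, \sum_(x < N | 0 < (@uniform_dist R N) x) f x = \sum_(x < N) f x.
  by move=> f; apply: eq_bigl => x; rewrite /uniform_dist Ni0.
case: (eqVneq eps 0) => [e00|en0].
  (* eps = 0: right-hand side is +oo *)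
  subst eps.
  rewrite /elogdiv eqxx mulyPos ?invr_gt0 // mulyPos; last lra.
  set X := ((N%:R)%:E * _)%E.
  have KLlb : ((\sum_(x < N | 0 < (@uniform_dist R N) x) (N%:R^-1 * ln N%:R^-1))%:E <= KL (@uniform_dist R N) p)%E.
    rewrite -sumEFin; apply: lee_sum => x _.
    rewrite /uniform_dist /elogdiv; case: eqP => [_|/eqP px0].
      by rewrite mulry gtr0_sg // mul1e leey.
    have [p0 _] := hp.
    have ppos : 0 < p x by rewrite lt_neqAle eq_sym px0 p0.
    rewrite -EFinM lee_fin; apply: ler_wpM2l; first exact: ltW.
    rewrite ler_ln ?posrE ?divr_gt0 //.
    by rewrite ler_pdivlMr // mulrC; apply: ler_piMl; [exact: ltW | exact: dist_le1].
  have Xnf : X != -oo%E.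
    apply: (@noNy _ _ (N%:R * \sum_(x < N | 0 < (@uniform_dist R N) x) (N%:R^-1 * ln N%:R^-1))).
    by rewrite /X EFinM; apply: lee_wpmul2l => //; rewrite lee_fin ltW.
  rewrite addey ?addye //.
  exact: leey.
  apply: (@noNy _ _ (0 + _)); rewrite EFinD; exact: leeD PWS0 (lexx _).
have ep : 0 < eps by rewrite lt_neqAle eq_sym en0 e0.
have ppos x : 0 < p x.
  apply: lt_le_trans (plb x); apply: divr_gt0 => //; lra.
have KLe : KL (@uniform_dist R N) p =
    (\sum_(x < N) (N%:R^-1 * ln (N%:R^-1 / p x)))%:E.
  rewrite /KL -KLf -sumEFin; apply: eq_bigr => x _.
  by rewrite /uniform_dist /elogdiv gt_eqF // EFinM.
rewrite KLe /elogdiv (gt_eqF ep) -!EFinM.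
set Kr := (\sum_(x < N) _)%R.
set B := [exists k : 'I_n, exists t : 'I_T,
            (tb k <= t < tb k.+1)%N && (q k (tnth xs t) == 0)].
case: (boolP B) => hB.
  have -> : PWS_codelen n tb q xs = +oo%E.
    apply/eqP; rewrite -leye_eq.
    case/existsP: hB => k /existsP [t /andP [ht /eqP hq]].
    rewrite /PWS_codelen (bigD1 k) //=.
    apply: le_trans (leeDl _ _); last first.
      apply: sume_ge0 => k' _; apply: sume_ge0 => t' _.
      have [q0 _] := qd k' (ltn_ord k').
      by apply: loginv_ge0 => //; apply: dist_le1; exact: qd.
    rewrite (bigD1 t) //=.
    apply: le_trans (leeDl _ _); last first.
      apply: sume_ge0 => t' _.
      have [q0 _] := qd k (ltn_ord k).
      by apply: loginv_ge0 => //; apply: dist_le1; exact: qd.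
    by rewrite /loginv /elogdiv hq eqxx.
  by rewrite !addye // leey.
have qpos (k : 'I_n) (t : 'I_T) : (tb k <= t < tb k.+1)%N -> 0 < q k (tnth xs t).
  move=> ht; have [q0 _] := qd k (ltn_ord k).
  rewrite lt_neqAle q0 andbT eq_sym; apply/negP => /eqP h0.
  move/negP: hB; apply; apply/existsP; exists k; apply/existsP; exists t.
  by rewrite ht h0 eqxx.
have St0 (t : 'I_T) : 0 < PS alpha eps p (take t xs) (tnth xs t).
  have N1 : (0 : R) < N%:R - 1 by lra.
  have hNi : N%:R * N%:R^-1 = 1 :> R by rewrite mulfV // gt_eqF.
  have hm : eps / (N%:R - 1) <= 1 - eps.
    rewrite ler_pdivrMr //.
    have : 0 <= (1 - N%:R^-1 - eps) * N%:R by rewrite mulr_ge0 //; lra.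
    nra.
  have ha : 0 <= alpha <= 1 by rewrite !ltW.
  have [_ h] := @inv_fold R N alpha eps (take t xs) p N2 ha hm (proj2 hp) plb.
  apply: lt_le_trans (h _); apply: divr_gt0 => //.
have -> : codelen (PS alpha eps p) xs =
    (\sum_(t < T) - ln (PS alpha eps p (take t xs) (tnth xs t)))%:E.
  rewrite /codelen -sumEFin; apply: eq_bigr => t _; exact: loginv_pos.
have -> : PWS_codelen n tb q xs =
    (\sum_(k < n) \sum_(t < T | (tb k <= t < tb k.+1)%N) - ln (q k (tnth xs t)))%:E.
  rewrite /PWS_codelen -sumEFin; apply: eq_bigr => k _.
  rewrite -sumEFin; apply: eq_bigr => t ht; exact: loginv_pos (qpos k t ht).
rewrite -!EFinD lee_fin.
exact: main_real.
Qed.
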